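(* Let $\boldsymbol{\mu}_1,\boldsymbol{\mu}_2\in\mathbb{R}^D$, let $\Sigma_1$ be positive definite, $\sigma>0$, and $\Sigma_2=\sigma^2\Sigma_1$. Then the zeroes in $[0,1]$ of the curvature function $\kappa(\alpha)$ are the same as the zeroes in $[0,1]$ of the cubic $$q_1(\alpha)=(\sigma^2(1-\alpha)+\alpha)^3-\alpha(1-\alpha)\mu^2\sigma^2,$$ where $\mu^2=(\boldsymbol{\mu}_2-\boldsymbol{\mu}_1)'\Sigma_1^{-1}(\boldsymbol{\mu}_2-\boldsymbol{\mu}_1)$.
   Context: Let $\phi_j(\mathbf{x})$ be the normal density with mean $\boldsymbol{\mu}_j$ and covariance $\Sigma_j$. With $\bar\alpha=1-\alpha$ and $S_\alpha=\bar\alpha\Sigma_1^{-1}+\alpha\Sigma_2^{-1}$, the ridgeline is $\mathbf{x}^*(\alpha)=S_\alpha^{-1}[\bar\alpha\Sigma_1^{-1}\boldsymbol{\mu}_1+\alpha\Sigma_2^{-1}\boldsymbol{\mu}_2]$, $\alpha\in[0,1]$. Write $\phi_j(\alpha)=\phi_j(\mathbf{x}^*(\alpha))$ with primes denoting $\alpha$-derivatives; the curvature function is $\kappa(\alpha)=\frac{\phi_2''(\alpha)\phi_1'(\alpha)-\phi_1''(\alpha)\phi_2'(\alpha)}{\phi_1(\alpha)\phi_2(\alpha)}$. *)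

(* Defs.v *)
From HB Require Import structures.
From mathcomp Require Import all_boot all_order all_algebra.
From mathcomp Require Import all_classical all_reals all_analysis.
Set Implicit Arguments. Unset Strict Implicit. Unset Printing Implicit Defensive.
Import Order.TTheory GRing.Theory Num.Theory.
Local Open Scope ring_scope.

Section Defs.
Variables (R : realType) (D : nat).

Definition posdef (A : 'M[R]_D) : Prop :=
  A^T = A /\ forall x : 'cV[R]_D, x != 0 -> 0 < (x^T *m A *m x) 0 0.

Definition normal_pdf (mu : 'cV[R]_D) (Sigma : 'M[R]_D) (x : 'cV[R]_D) : R :=
  expR (- (((x - mu)^T *m invmx Sigma *m (x - mu)) 0 0) / 2)
  / Num.sqrt ((2 * pi) ^+ D * \det Sigma).

Definition S_alpha (Sigma1 Sigma2 : 'M[R]_D) (alpha : R) : 'M[R]_D :=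
  (1 - alpha) *: invmx Sigma1 + alpha *: invmx Sigma2.

Definition ridgeline (mu1 mu2 : 'cV[R]_D) (Sigma1 Sigma2 : 'M[R]_D) (alpha : R)
  : 'cV[R]_D :=
  invmx (S_alpha Sigma1 Sigma2 alpha) *m
    ((1 - alpha) *: (invmx Sigma1 *m mu1) + alpha *: (invmx Sigma2 *m mu2)).

Definition phi_ridge (mu1 mu2 : 'cV[R]_D) (Sigma1 Sigma2 : 'M[R]_D)
  (mu : 'cV[R]_D) (Sigma : 'M[R]_D) : R -> R :=
  fun alpha => normal_pdf mu Sigma (ridgeline mu1 mu2 Sigma1 Sigma2 alpha).

Definition kappa (mu1 mu2 : 'cV[R]_D) (Sigma1 Sigma2 : 'M[R]_D) (alpha : R) : R :=
  let phi1 := phi_ridge mu1 mu2 Sigma1 Sigma2 mu1 Sigma1 in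
  let phi2 := phi_ridge mu1 mu2 Sigma1 Sigma2 mu2 Sigma2 in
  (derive1n 2 phi2 alpha * derive1 phi1 alpha
     - derive1n 2 phi1 alpha * derive1 phi2 alpha)
  / (phi1 alpha * phi2 alpha).

Definition mahal2 (mu1 mu2 : 'cV[R]_D) (Sigma1 : 'M[R]_D) : R :=
  ((mu2 - mu1)^T *m invmx Sigma1 *m (mu2 - mu1)) 0 0.

End Defs.

Definition q1 (R : realType) (sigma musq alpha : R) : R :=
  (sigma ^+ 2 * (1 - alpha) + alpha) ^+ 3
  - alpha * (1 - alpha) * musq * sigma ^+ 2.

(* Main.v *)
Require Import Defs.
From HB Require Import structures.
From mathcomp Require Import all_boot all_order all_algebra.
From mathcomp Require Import all_classical all_reals all_analysis.
From mathcomp Require Import ring lra.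
Import Order.TTheory GRing.Theory Num.Theory.
Import numFieldNormedType.Exports.
Local Open Scope ring_scope.
Local Open Scope classical_set_scope.

Section Mx.
Variables (R : realType) (D : nat).

Lemma quadZ (v : 'cV[R]_D) (M : 'M[R]_D) (a : R) :
  ((a *: v)^T *m M *m (a *: v)) 0 0 = a ^+ 2 * (v^T *m M *m v) 0 0.
Proof.
have -> : (a *: v)^T = a *: v^T by apply/matrixP => i j; rewrite !mxE.
by rewrite -scalemxAr -!scalemxAl scalerA !mxE expr2.
Qed.

Lemma quadZm (v : 'cV[R]_D) (M : 'M[R]_D) (a : R) :
  (v^T *m (a *: M) *m v) 0 0 = a * (v^T *m M *m v) 0 0.
Proof. by rewrite -scalemxAr -scalemxAl mxE. Qed.

Lemma xTx_gt0 (x : 'cV[R]_D) : x != 0 -> 0 < (x^T *m x) 0 0.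
Proof.
move=> xn0.
have [i xi] : exists i, x i 0 != 0.
  apply/existsP; apply: contraR xn0 => /existsPn H.
  apply/eqP/matrixP => i j; rewrite (ord1 j) mxE; exact/eqP/negbNE/H.
rewrite mxE (bigD1 i) //= ltr_pwDl //.
- by rewrite mxE -expr2 lt_def sqrf_eq0 xi sqr_ge0.
- by apply: sumr_ge0 => j _; rewrite mxE -expr2 sqr_ge0.
Qed.

Lemma posdef_unit (A : 'M[R]_D) :
  (forall x : 'cV[R]_D, x != 0 -> 0 < (x^T *m A *m x) 0 0) -> A \in unitmx.
Proof.
move=> H; rewrite -row_free_unit -kermx_eq0; apply/negPn/negP => nz.
have [i ri] : exists i, row i (kermx A) != 0.
  apply/existsP; apply: contraR nz => /existsPn Hr.
  apply/eqP/row_matrixP => i; rewrite row0; exact/eqP/negbNE/Hr.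
have := H (row i (kermx A))^T; rewrite trmxK.
have -> : row i (kermx A) *m A = 0 by rewrite -row_mul mulmx_ker row0.
rewrite mul0mx mxE ltxx; move=> H0; apply: (negP ri); rewrite -trmx_eq0; apply/negPn/negP => /H0; done.

Qed.

Lemma mahal_pos (A : 'M[R]_D) (d : 'cV[R]_D) :
  posdef A -> d != 0 -> 0 < (d^T *m invmx A *m d) 0 0.
Proof.
move=> [AT Ap] dn0.
have uA : A \in unitmx by apply: posdef_unit.
set y := invmx A *m d.
have dE : d = A *m y by rewrite /y mulKVmx.
have yn0 : y != 0 by apply: contraNneq dn0 => y0; rewrite dE y0 mulmx0.
rewrite dE trmx_mul AT -!mulmxA mulKVmx // mulmxA; exact: Ap.
Qed.

Lemma posdef_det (A : 'M[R]_D) : posdef A -> 0 < \det A.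
Proof.
move=> [AT Ap].
pose M : 'M[{poly R}]_D := \matrix_(i, j) ('X * (1%:M i j)%:P + (1 - 'X) * (A i j)%:P).
pose P := \det M.
have PE s : P.[s] = \det (s *: 1%:M + (1 - s) *: A).
  rewrite -horner_evalE -det_map_mx; congr (\det _).
  by apply/matrixP => i j; rewrite !mxE; change (horner_eval s ('X * ((i == j)%:R)%:P + (1 - 'X) * (A i j)%:P) = s * (i == j)%:R + (1 - s) * A i j); rewrite horner_evalE !hornerE.
have Bu s : 0 <= s <= 1 -> \det (s *: 1%:M + (1 - s) *: A) != 0.
  move=> /andP[s0 s1].
  have : s *: 1%:M + (1 - s) *: A \in unitmx.
    apply: posdef_unit => x xn0.
    rewrite mulmxDr mulmxDl mxE -!scalemxAr -!scalemxAl !mxE mulmx1.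
    have h1 := @xTx_gt0 x xn0; have h2 := Ap x xn0.
    move: h1 h2; rewrite !mxE.
    set a := \sum_j _; set b := \sum_j _ => h1 h2.
    have [->|sp] := eqVneq s 0; first by rewrite mul0r add0r subr0 mul1r.
    have sgt : 0 < s by rewrite lt_def sp s0.
    apply: ltr_pwDl; first exact: mulr_gt0.
    by apply: mulr_ge0; rewrite ?subr_ge0 // ltW.
  by rewrite unitmxE unitfE.
rewrite ltNge; apply/negP => dle.
have := @poly_ivt R P 0 1 ler01.
rewrite !PE scale0r add0r subr0 scale1r scale1r subrr scale0r addr0 det1.
case; first by rewrite dle ler01.
move=> x x01; rewrite /root PE; apply/negP; exact: Bu.
Qed.

Lemma ridge_eq (mu1 mu2 : 'cV[R]_D) (S1 : 'M[R]_D) (t y : R) :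
  S1 \in unitmx -> 0 < t -> t * (1 - y) + y != 0 ->
  ridgeline mu1 mu2 S1 (t *: S1) y = mu1 + (y / (t * (1 - y) + y)) *: (mu2 - mu1).
Proof.
move=> uS tp Ln0.
have tu : t \is a GRing.unit by rewrite unitfE gt_eqF.
have iZ : invmx (t *: S1) = t^-1 *: invmx S1 by rewrite invmxZ // unitmxZ.
have cn0 : (1 - y) + y * t^-1 != 0.
  have -> : (1 - y) + y * t^-1 = (t * (1 - y) + y) / t by field; rewrite gt_eqF.
  by rewrite mulf_neq0 // invr_eq0 gt_eqF.
rewrite /ridgeline /S_alpha iZ scalerA (mulrC y) -scalerDl.
rewrite invmxZ ?unitmxZ ?unitfE ?unitmx_inv //. rewrite invmxK.
rewrite -scalemxAl -(scalemxAl (t^-1)) mulmxDr -!scalemxAr !mulKVmx //.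
apply/matrixP => i j; rewrite !mxE.
  by field; rewrite Ln0 gt_eqF.
by rewrite mulrC.
Qed.
End Mx.

Set Implicit Arguments. Unset Strict Implicit.
Section An.
Variable R : realType.
Implicit Types (f g u : R -> R) (x : R).

Lemma isdM f g x df dg : is_derive x 1 f df -> is_derive x 1 g dg ->
  is_derive x 1 (fun z => f z * g z) (f x * dg + g x * df).
Proof. move=> H1 H2; exact: (is_deriveM H1 H2). Qed.

Lemma isdD f g x df dg : is_derive x 1 f df -> is_derive x 1 g dg ->
  is_derive x 1 (fun z => f z + g z) (df + dg).
Proof. move=> H1 H2; exact: (is_deriveD H1 H2). Qed.

Lemma isdN f x df : is_derive x 1 f df ->
  is_derive x 1 (fun z => - f z) (- df).
Proof. move=> H1; exact: (is_deriveN H1). Qed.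

Lemma isdV f x df : f x != 0 -> is_derive x 1 f df ->
  is_derive x 1 (fun z => (f z)^-1) (- (f x) ^- 2 * df).
Proof. move=> H0 H1; exact: (is_deriveV H0 H1). Qed.

Lemma isdc x (c : R) : is_derive x 1 (fun _ => c) 0.
Proof. exact: is_derive_cst. Qed.

Lemma isdid x : is_derive x 1 (fun z : R => z) 1.
Proof. exact: is_derive_id. Qed.

Lemma isdexp u x du : is_derive x 1 u du ->
  is_derive x 1 (fun z => expR (u z)) (expR (u x) * du).
Proof. move=> H; exact: (is_derive1_comp (is_derive_expR (u x)) H). Qed.

Lemma d1E f x df : is_derive x 1 f df -> derive1 f x = df.
Proof. by move=> H; rewrite derive1E derive_val. Qed.

Lemma d2E f (h : R -> R) x (dh : R) : (\forall y \near x, is_derive y (1:R) f (h y)) ->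
  is_derive x 1 h dh -> derive1n 2 f x = dh.
Proof.
move=> Hn Hh; rewrite derive1nS derive1n1 derive1E.
rewrite (@near_eq_derive _ _ _ _ h); first by rewrite derive_val.
by apply: filterS Hn => y Hy; rewrite d1E.
Qed.

Lemma isdsq f x df : is_derive x 1 f df ->
  is_derive x 1 (fun z => f z ^+ 2) (2 * f x * df).
Proof.
move=> H; have -> : (fun z => f z ^+ 2) = (fun z => f z * f z).
  by apply/funext => z; rewrite expr2.
apply: (is_derive_eq (isdM H H)); ring.
Qed.

Lemma isdcube f x df : is_derive x 1 f df ->
  is_derive x 1 (fun z => f z ^+ 3) (3 * f x ^+ 2 * df).
Proof.
move=> H; have H3 := isdM (isdsq H) H.
have -> : (fun z => f z ^+ 3) = (fun z => f z ^+ 2 * f z).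
  by apply/funext => z; rewrite exprSr.
apply: (is_derive_eq H3); ring.
Qed.

Definition Lf (t z : R) := t * (1 - z) + z.
Definition wf t z := z / Lf t z.
Definition dwf t z := t / Lf t z ^+ 2.
Definition ddwf t z := - (2 * t * (1 - t)) / Lf t z ^+ 3.

Lemma isdL t x : is_derive x 1 (Lf t) (1 - t).
Proof.
apply: (is_derive_eq (isdD (isdM (isdc x t) (isdD (isdc x 1) (isdN (isdid x)))) (isdid x))).
ring.
Qed.

Lemma isdw t x : Lf t x != 0 -> is_derive x 1 (wf t) (dwf t x).
Proof.
move=> Ln0.
apply: (is_derive_eq (isdM (isdid x) (isdV Ln0 (isdL t x)))).
rewrite /dwf /Lf in Ln0 *; field; exact: Ln0.
Qed.

Lemma isddw t x : Lf t x != 0 -> is_derive x 1 (dwf t) (ddwf t x).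
Proof.
move=> Ln0.
have L2 : Lf t x ^+ 2 != 0 by rewrite expf_neq0.
have H := isdM (isdc x t) (@isdV (fun z => Lf t z ^+ 2) x _ L2 (isdsq (isdL t x))).
apply: (is_derive_eq H).
rewrite /ddwf /Lf in Ln0 L2 *; field; exact: Ln0.
Qed.

Lemma Lf_near t y : 0 < Lf t y -> \forall z \near y, 0 < Lf t z.
Proof.
move=> Lp.
have c : Lf t @ y --> Lf t y.
  have : derivable (Lf t) y 1 by case: (isdL t y).
  by move/derivable1_diffP/differentiable_continuous.
exact: (cvgr_gt _ c _ Lp).
Qed.

Lemma gen_deriv (P : R -> Prop) (f u du : R -> R) (k x ddu : R) :
  P x -> (forall y, P y -> \forall z \near y, P z) ->
  (forall y, P y -> f y = expR (u y) * k) ->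
  (forall y, P y -> is_derive y 1 u (du y)) ->
  is_derive x 1 du ddu ->
  [/\ f x = expR (u x) * k, derive1 f x = expR (u x) * k * du x &
      derive1n 2 f x = expR (u x) * k * (ddu + du x ^+ 2)].
Proof.
move=> Px Pn Pf Pu Hdu.
have Hf y : P y -> is_derive y 1 f (expR (u y) * k * du y).
  move=> Py.
  have H := isdM (isdexp (Pu y Py)) (isdc y k).
  apply: (@near_eq_is_derive _ _ _ (fun z => expR (u z) * k)).
    by apply: filterS (Pn y Py) => z Pz; rewrite Pf.
  by apply: (is_derive_eq H); ring.
split; first exact: Pf.
  exact: d1E (Hf x Px).
apply: (@d2E _ (fun y => expR (u y) * k * du y)).
  by apply: filterS (Pn x Px) => y Py; exact: Hf.
have H := isdM (isdM (isdexp (Pu x Px)) (isdc x k)) Hdu.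
by apply: (is_derive_eq H); ring.
Qed.

Definition u1f t m z := - (wf t z ^+ 2 * m) / 2.
Definition du1f t m z := - (m * wf t z * dwf t z).
Definition ddu1f t m z := - (m * (dwf t z ^+ 2 + wf t z * ddwf t z)).
Definition u2f t m z := - ((wf t z - 1) ^+ 2 * (t^-1 * m)) / 2.
Definition du2f t m z := - (t^-1 * m * (wf t z - 1) * dwf t z).
Definition ddu2f t m z := - (t^-1 * m * (dwf t z ^+ 2 + (wf t z - 1) * ddwf t z)).

Lemma isdu1 t m x : Lf t x != 0 -> is_derive x 1 (u1f t m) (du1f t m x).
Proof.
move=> Ln0.
have H := isdM (isdN (isdM (isdsq (isdw Ln0)) (isdc x m))) (isdc x 2^-1).
apply: (is_derive_eq H); by rewrite /du1f; field.
Qed.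

Lemma isddu1 t m x : Lf t x != 0 -> is_derive x 1 (du1f t m) (ddu1f t m x).
Proof.
move=> Ln0.
have H := isdN (isdM (isdM (isdc x m) (isdw Ln0)) (isddw Ln0)).
apply: (is_derive_eq H); rewrite /ddu1f; ring.
Qed.

Lemma isdu2 t m x : Lf t x != 0 -> is_derive x 1 (u2f t m) (du2f t m x).
Proof.
move=> Ln0.
have H1 := isdD (isdw Ln0) (isdc x (-1)).
have H := isdM (isdN (isdM (@isdsq (fun z => wf t z - 1) _ _ H1) (isdc x (t^-1 * m)))) (isdc x 2^-1).
apply: (is_derive_eq H); rewrite /du2f; move: (t^-1) => ti; by field.
Qed.

Lemma isddu2 t m x : Lf t x != 0 -> is_derive x 1 (du2f t m) (ddu2f t m x).
Proof.
move=> Ln0.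
have H1 := isdD (isdw Ln0) (isdc x (-1)).
have H := isdN (isdM (isdM (isdc x (t^-1 * m)) H1) (isddw Ln0)).
apply: (is_derive_eq H); rewrite /ddu2f; move: (t^-1) => ti; ring.
Qed.
End An.


Lemma kappa_alg (R : realType) (t m y : R) : t != 0 -> Lf t y != 0 ->
 (ddu2f t m y + du2f t m y ^+ 2) * du1f t m y - (ddu1f t m y + du1f t m y ^+ 2) * du2f t m y =
 m ^+ 2 * t ^+ 2 * ((t * (1 - y) + y) ^+ 3 - y * (1 - y) * m * t) / Lf t y ^+ 9.
Proof.
move=> tn0 Ln0.
rewrite /ddu2f /du2f /ddu1f /du1f /ddwf /dwf /wf /Lf in Ln0 *.
field.
by rewrite Ln0 tn0.
Qed.

Theorem lemma1 (R : realType) (D : nat) (mu1 mu2 : 'cV[R]_D)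
  (Sigma1 Sigma2 : 'M[R]_D) (sigma : R) :
  posdef Sigma1 -> 0 < sigma -> Sigma2 = sigma ^+ 2 *: Sigma1 ->
  mu1 != mu2 ->
  forall alpha : R, 0 <= alpha <= 1 ->
    (kappa mu1 mu2 Sigma1 Sigma2 alpha = 0 <->
     q1 sigma (mahal2 mu1 mu2 Sigma1) alpha = 0).
Proof.
move=> PS sp S2E dn a /andP[a0 a1].
have tp : 0 < sigma ^+ 2 by rewrite exprn_gt0.
have dn0 : mu2 - mu1 != 0 by rewrite subr_eq0 eq_sym.
have mp : 0 < mahal2 mu1 mu2 Sigma1 by apply: mahal_pos.
have uS : Sigma1 \in unitmx by case: PS => _ Ap; apply: posdef_unit.
have detp : 0 < \det Sigma1 by apply: posdef_det.
rewrite /q1.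
have [m mE] : exists m, mahal2 mu1 mu2 Sigma1 = m by eexists.
rewrite mE in mp *.
have iZ : invmx Sigma2 = (sigma ^+ 2)^-1 *: invmx Sigma1.
  by rewrite S2E invmxZ // unitmxZ // unitfE gt_eqF.
have det2 : \det Sigma2 = (sigma ^+ 2) ^+ D * \det Sigma1 by rewrite S2E detZ.
have pip : 0 < (2 * pi) ^+ D :> R by rewrite exprn_gt0 // mulr_gt0 // pi_gt0.
set k1 := (Num.sqrt ((2 * pi) ^+ D * \det Sigma1))^-1.
set k2 := (Num.sqrt ((2 * pi) ^+ D * \det Sigma2))^-1.
have k1p : 0 < k1 by rewrite invr_gt0 sqrtr_gt0 mulr_gt0.
have k2p : 0 < k2 by rewrite invr_gt0 sqrtr_gt0 det2 !mulr_gt0 // exprn_gt0.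
move: (sigma ^+ 2) tp S2E iZ => t tp S2E iZ.
have tn0 : t != 0 by rewrite gt_eqF.
pose P := fun y => 0 < Lf t y.
have Pa : P a by rewrite /P /Lf; nra.
have Pn : forall y, P y -> \forall z \near y, P z by move=> y; apply: Lf_near.
have rE y : P y -> ridgeline mu1 mu2 Sigma1 Sigma2 y = mu1 + wf t y *: (mu2 - mu1).
  by move=> Py; rewrite S2E ridge_eq // gt_eqF.
have f1 y : P y -> phi_ridge mu1 mu2 Sigma1 Sigma2 mu1 Sigma1 y = expR (u1f t m y) * k1.
  move=> Py; rewrite /phi_ridge /Defs.normal_pdf rE //.
  have -> : mu1 + wf t y *: (mu2 - mu1) - mu1 = wf t y *: (mu2 - mu1).
    by rewrite addrC addKr.
  by rewrite quadZ -/(mahal2 mu1 mu2 Sigma1) mE /u1f.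
have f2 y : P y -> phi_ridge mu1 mu2 Sigma1 Sigma2 mu2 Sigma2 y = expR (u2f t m y) * k2.
  move=> Py; rewrite /phi_ridge /Defs.normal_pdf rE //.
  have -> : mu1 + wf t y *: (mu2 - mu1) - mu2 = (wf t y - 1) *: (mu2 - mu1).
    by apply/matrixP => i j; rewrite !mxE; ring.
  by rewrite quadZ iZ quadZm -/(mahal2 mu1 mu2 Sigma1) mE /u2f mulrA.
have [e1 d1 dd1] := gen_deriv Pa Pn f1 (fun y Py => isdu1 m (lt0r_neq0 Py))
   (isddu1 m (lt0r_neq0 Pa)).
have [e2 d2 dd2] := gen_deriv Pa Pn f2 (fun y Py => isdu2 m (lt0r_neq0 Py))
   (isddu2 m (lt0r_neq0 Pa)).
rewrite /kappa; cbv zeta; rewrite dd1 dd2 d1 d2 e1 e2.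
have E1 : expR (u1f t m a) * k1 != 0 by rewrite mulf_neq0 // gt_eqF // expR_gt0.
have E2 : expR (u2f t m a) * k2 != 0 by rewrite mulf_neq0 // gt_eqF // expR_gt0.
have -> : (expR (u2f t m a) * k2 * (ddu2f t m a + du2f t m a ^+ 2) *
     (expR (u1f t m a) * k1 * du1f t m a) -
     expR (u1f t m a) * k1 * (ddu1f t m a + du1f t m a ^+ 2) *
     (expR (u2f t m a) * k2 * du2f t m a)) /
    (expR (u1f t m a) * k1 * (expR (u2f t m a) * k2)) =
    (ddu2f t m a + du2f t m a ^+ 2) * du1f t m a - (ddu1f t m a + du1f t m a ^+ 2) * du2f t m a.
  move: E1 E2; move: (expR (u1f t m a) * k1) (expR (u2f t m a) * k2) => A B An Bn.
  by field; rewrite An Bn.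
rewrite kappa_alg // ?gt_eqF //.
have c0 : m ^+ 2 * t ^+ 2 / Lf t a ^+ 9 != 0.
  by rewrite !mulf_neq0 ?invr_eq0 ?expf_neq0 ?gt_eqF.
set Q := (t * (1 - a) + a) ^+ 3 - a * (1 - a) * m * t.
rewrite mulrAC.
split => [/eqP|->]; last by rewrite mulr0.
by rewrite mulf_eq0 (negbTE c0) /= => /eqP.
Qed.
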